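(* Let $K$ be a field of characteristic $\neq2$, $\zeta_4$ a primitive fourth root of unity in a fixed algebraic closure of $K$, and let $a,b\in K^*$ with $a/b\in(K^* )^2$. Choose fourth roots of $a$ and $b$ and let $a,b:G_K\to\mathbb Z/4$ be the corresponding Kummer cocycles (via $\zeta_4$). Then $\binom a2+\binom b2:G_K\to\mathbb Z/2$ equals the cocycle $\{\sqrt b/\sqrt a\}:G_K\to\mathbb Z/2$, where $\sqrt b,\sqrt a$ are the squares of the chosen fourth roots of $b,a$.
   Context: The Kummer cocycle of $a$ is $g\mapsto a(g)$ with $g(\sqrt[4]a)/\sqrt[4]a=\zeta_4^{a(g)}$; $\binom a2$ is $g\mapsto\binom{a(g)}2\bmod2$ (well defined for $a(g)\in\mathbb Z/4$). For $z\in K^*$, $\{z\}:G_K\to\mathbb Z/2$ is the mod-$2$ Kummer cocycle $g\mapsto g(\sqrt z)/\sqrt z\in\mu_2=\mathbb Z/2$. *)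

(* Defs.v *)
From HB Require Import structures.
From mathcomp Require Import all_boot all_order all_algebra.
Set Implicit Arguments. Unset Strict Implicit. Unset Printing Implicit Defensive.
Import Order.TTheory GRing.Theory Num.Theory.
Local Open Scope ring_scope.

(* Together with L being
   algebraically closed, L is an algebraic closure of K, and G_K is modelled by
   the ring automorphisms of L fixing iota(K). *)
Definition algebraic_over (K L : fieldType) (iota : {rmorphism K -> L}) : Prop :=
  forall x : L, exists p : {poly K}, p != 0 /\ root (map_poly iota p) x.

(* Value of the mod-4 Kummer cocycle of (a fourth root) alpha at g:
   i in {0,1,2,3} with g(alpha)/alpha = zeta^i. *)
Definition kummer4 (L : fieldType) (zeta alpha : L) (g : L -> L) (i : nat) : Prop :=
  (i < 4)%N /\ g alpha = zeta ^+ i * alpha.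

(* Value of the mod-2 Kummer cocycle {z} at g, where r is a square root of z:
   g(r)/r = (-1)^e. *)
Definition kummer2 (L : fieldType) (r : L) (g : L -> L) (e : nat) : Prop :=
  g r = (-1) ^+ e * r.

(* Main.v *)
Require Import Defs.
From HB Require Import structures.
From mathcomp Require Import all_boot all_order all_algebra.
From mathcomp Require Import ring.
Import Order.TTheory GRing.Theory Num.Theory.
Local Open Scope ring_scope.

Theorem lemma12p6 (K : fieldType) (L : closedFieldType)
    (iota : {rmorphism K -> L}) (Lalg : algebraic_over iota)
    (char_ne2 : (2%:R : K) != 0)
    (zeta : L) (hzeta : 4.-primitive_root zeta)
    (a b : K) (ha : a != 0) (hb : b != 0)
    (hab : exists c : K, a / b = c ^+ 2)
    (alpha beta : L) (halpha : alpha ^+ 4 = iota a) (hbeta : beta ^+ 4 = iota b)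
    (g : {rmorphism L -> L}) (hg : bijective g)
    (hgK : forall x : K, g (iota x) = iota x)
    (i j : nat) (hi : kummer4 zeta alpha g i) (hj : kummer4 zeta beta g j)
    (r : L) (hr : r ^+ 2 = beta ^+ 2 / alpha ^+ 2) :
  kummer2 r g (('C(i, 2) + 'C(j, 2)) %% 2)%N.
Proof.
case: hab => c hc.
have c0 : c != 0.
  apply/eqP => c0; move: hc; rewrite c0 expr0n /= => /eqP.
  by rewrite mulf_eq0 invr_eq0 (negPf ha) (negPf hb).
have a0 : alpha != 0.
  apply/eqP => a0; move: halpha; rewrite a0 expr0n /= => /esym/eqP.
  by rewrite fmorph_eq0 (negPf ha).
have b0 : beta != 0.
  apply/eqP => b0; move: hbeta; rewrite b0 expr0n /= => /esym/eqP.
  by rewrite fmorph_eq0 (negPf hb).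
have two0 : (2%:R : L) != 0.
  by rewrite -(rmorph_nat iota) fmorph_eq0.
have z2 : zeta ^+ 2 = -1.
  have : (zeta ^+ 2) ^+ 2 == 1 by rewrite -exprM -(prim_order_dvd hzeta).
  rewrite sqrf_eq1 => /orP[]; last by move/eqP.
  by rewrite -(prim_order_dvd hzeta).
have z0 : zeta != 0 by apply/eqP => z0; move: z2; rewrite z0 expr0n /= => /eqP; rewrite eq_sym oppr_eq0 oner_eq0.
set t := beta / alpha.
have t0 : t != 0 by rewrite mulf_neq0 ?invr_eq0.
have ht4 : (t ^+ 2) ^+ 2 = (iota c^-1) ^+ 2.
  rewrite -exprM expr_div_n halpha hbeta -fmorphV -rmorphXn -rmorphM /=.
  congr (iota _).
  by rewrite exprVn -hc invf_div.
have gs : g (t ^+ 2) = t ^+ 2.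
  move/eqP: ht4; rewrite eqf_sqr => /orP[] /eqP ->; rewrite ?rmorphN /= hgK //.
have gt : g t = zeta ^+ j / zeta ^+ i * t.
  rewrite /t rmorphM /= fmorphV /= hi.2 hj.2 /=; field.
  by rewrite a0 expf_neq0.
have {}hr : (r == t) || (r == - t) by rewrite -eqf_sqr hr /t expr_div_n.
case: hi hj => hi _ [hj _].
suff: g t = (-1) ^+ (('C(i, 2) + 'C(j, 2)) %% 2)%N * t.
  rewrite /kummer2 => H; case/orP: hr => /eqP -> //.
  by rewrite rmorphN /= mulrN H.
rewrite gt; move: gs; rewrite rmorphXn /= gt; clear gt.
have z3 : zeta ^+ 3 = - zeta by rewrite exprS z2 mulrN1.
clearbody t.
have tt : t ^+ 2 != 0 by rewrite expf_neq0.
case: i hi => [|[|[|[|//]]]] _; case: j hj => [|[|[|[|//]]]] _ /=;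
  rewrite ?expr0 ?expr1 ?z2 ?z3 => H; try (field; by rewrite ?z0 ?oppr_eq0 ?oner_eq0);
  exfalso; move: H; (have H2 : t ^+ 2 = - t ^+ 2 -> False by
    move=> /eqP; rewrite -subr_eq0 opprK -mulr2n -mulr_natr mulf_eq0 (negPf tt) (negPf two0));
  move=> H; apply: H2; rewrite -{1}H;
  rewrite ?(exprMn, expr_div_n, exprVn, sqrrN, z2, expr1n); field; by rewrite ?z0 ?oppr_eq0 ?oner_eq0.
Qed.
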